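(* Let $T$ be a subcubic tree with $\gamma_e^*(T)=\gamma_{e,f}^*(T)>1$. For $i\in\{1,2,3\}$ let $V_i$ be the set of vertices of degree $i$ in $T$, and let $D$ be a minimum porous exponential dominating set of $T$. Then: (i) $w^*_{(T,D)}(u)=1$ for every vertex $u\in V_1\cup V_2$; (ii) $D\subseteq V_3$ and $N_T(V_1\cup V_2)\subseteq V_3\setminus D$, where $N_T(X)$ denotes the set of vertices adjacent to some vertex of $X$; (iii) $T$ contains no vertex $u\in V_1$ and vertex $w\in V_2$ with $\mathrm{dist}_T(u,w)=2$; (iv) $T$ contains no two vertices $u_1,u_2\in V_1$ and vertex $v\in V_2$ such that $\mathrm{dist}_T(u_1,u_2)=2$ and $\mathrm{dist}_T(u_1,v)\in\{3,4\}$.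
   Context: All graphs are finite, simple and undirected; subcubic means maximum degree at most $3$. For a graph $G$ and $D\subseteq V(G)$, let $w^*_{(G,D)}(u)=\sum_{v\in D}\left(\frac12\right)^{\mathrm{dist}_G(u,v)-1}$ for $u\in V(G)$, where $\mathrm{dist}_G$ is the usual distance and $\left(\frac12\right)^\infty=0$. $D$ is a porous exponential dominating set if $w^*_{(G,D)}(u)\ge 1$ for every $u\in V(G)$; $\gamma_e^*(G)$ is the minimum size of such a set, and a porous exponential dominating set of that size is called minimum. The fractional porous exponential domination number $\gamma_{e,f}^*(G)$ is the optimum value of the linear program: minimize $\sum_{u\in V(G)}x(u)$ subject to $\sum_{u\in V(G)}\left(\frac12\right)^{\mathrm{dist}_G(u,v)-1}x(u)\ge 1$ for every $v\in V(G)$ and $x\ge 0$. *)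

(* Defs.v *)
From HB Require Import structures.
From mathcomp Require Import all_boot all_order all_algebra.
Set Implicit Arguments. Unset Strict Implicit. Unset Printing Implicit Defensive.
Import Order.TTheory GRing.Theory Num.Theory.

Definition simple_graph (T : finType) (e : rel T) : Prop :=
  symmetric e /\ irreflexive e.

Definition is_tree (T : finType) (e : rel T) : Prop :=
  simple_graph e /\
  (forall u v : T, connect e u v) /\
  (forall c : seq T, uniq c -> 2 < size c -> ~~ cycle e c).

Definition deg (T : finType) (e : rel T) (v : T) : nat := #|[set w | e v w]|.

Definition subcubic (T : finType) (e : rel T) : Prop := forall v, deg e v <= 3.

Fixpoint within (T : finType) (e : rel T) (n : nat) (u v : T) : bool :=
  if n is n'.+1 then within e n' u v || [exists w, within e n' u w && e w v]
  else u == v.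

(* Graph distance; meaningful when connect e u v (then it is < #|T|). *)
Definition dist (T : finType) (e : rel T) (u v : T) : nat :=
  find (fun n => within e n u v) (iota 0 #|T|).

(* (1/2)^(dist(u,v) - 1) = 2 * (1/2)^dist(u,v), and 0 if dist = infinity *)
Definition wt (R : numFieldType) (T : finType) (e : rel T) (u v : T) : R :=
  (if connect e u v then 2 * (2^-1) ^+ dist e u v else 0)%R.

Definition wstar (R : numFieldType) (T : finType) (e : rel T) (D : {set T}) (u : T) : R :=
  (\sum_(v in D) wt R e u v)%R.

Definition porous_exp_dom (R : numFieldType) (T : finType) (e : rel T) (D : {set T}) : Prop :=
  forall u : T, (1 <= wstar R e D u)%R.

(* D is a minimum porous exponential dominating set; so gamma_e^*(G) = #|D|. *)
Definition min_porous_exp_dom (R : numFieldType) (T : finType) (e : rel T) (D : {set T}) : Prop :=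
  porous_exp_dom R e D /\ (forall D' : {set T}, porous_exp_dom R e D' -> #|D| <= #|D'|).

Definition frac_feasible (R : numFieldType) (T : finType) (e : rel T) (x : T -> R) : Prop :=
  (forall u, 0 <= x u)%R /\ (forall v, 1 <= \sum_(u : T) wt R e u v * x u)%R.

(* val is the optimum value of the LP, i.e. val = gamma_{e,f}^*(G) *)
Definition is_frac_opt (R : numFieldType) (T : finType) (e : rel T) (val : R) : Prop :=
  (exists x, frac_feasible e x /\ (\sum_(u : T) x u)%R = val) /\
  (forall x, frac_feasible e x -> (val <= \sum_(u : T) x u)%R).

Arguments wt R [T] e u v.
Arguments wstar R [T] e D u.
Arguments porous_exp_dom R [T] e D.
Arguments min_porous_exp_dom R [T] e D.
Arguments is_frac_opt R [T] e val.

(* Main.v *)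
Require Import Defs.
From HB Require Import structures.
From mathcomp Require Import all_boot all_order all_algebra zify ring lra.
Set Implicit Arguments. Unset Strict Implicit. Unset Printing Implicit Defensive.
Import Order.TTheory GRing.Theory Num.Theory.

Section Dist.
Variables (T : finType) (e : rel T).

Lemma within_path n u v : within e n u v ->
  exists p, [/\ path e u p, last u p = v & size p <= n].
Proof.
elim: n v => [|n IH] v /=.
  by move/eqP=> <-; exists [::].
case/orP=> [/IH [p [H1 H2 H3]] | /existsP [w /andP [/IH [p [H1 H2 H3]] Hwv]]].
  by exists p; split=> //; apply: leqW.
exists (rcons p v); split.
- by rewrite rcons_path H1 H2.
- by rewrite last_rcons.
- by rewrite size_rcons.
Qed.

Lemma path_within p u : path e u p -> within e (size p) u (last u p).
Proof.
elim/last_ind: p => [|p x IH] /=; first by rewrite eqxx.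
rewrite rcons_path size_rcons last_rcons => /andP [H1 H2] /=.
apply/orP; right; apply/existsP; exists (last u p).
by rewrite IH.
Qed.

Lemma within_mono m n u v : m <= n -> within e m u v -> within e n u v.
Proof.
elim: n => [|n IH]; first by rewrite leqn0 => /eqP->.
rewrite leq_eqVlt => /orP [/eqP -> //| Hm] H /=.
by rewrite IH.
Qed.

Hypothesis Hc : forall u v, connect e u v.

Lemma dist_within u v : within e (dist e u v) u v.
Proof.
have Hh : has (fun n => within e n u v) (iota 0 #|T|).
  case/connectP: (Hc u v) => p Hp ->.
  case/shortenP: Hp => p' Hp' Hu _.
  apply/hasP; exists (size p').
    rewrite mem_iota /= add0n.
    by have := max_card (mem (u :: p')); rewrite (card_uniqP Hu).
  exact: path_within.
have := nth_find 0 Hh.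
rewrite has_find size_iota in Hh.
by rewrite nth_iota // add0n.
Qed.

Lemma dist_min n u v : within e n u v -> dist e u v <= n.
Proof.
move=> H; case: (leqP #|T| n) => Hn.
  apply: leq_trans Hn; rewrite /dist.
  by have := find_size (fun n => within e n u v) (iota 0 #|T|); rewrite size_iota.
rewrite leqNgt; apply/negP => Hlt.
have := before_find 0 Hlt.
by rewrite nth_iota // add0n H.
Qed.

Lemma dist_le p u : path e u p -> dist e u (last u p) <= size p.
Proof. by move/path_within/dist_min. Qed.

Lemma dist_path u v : exists p, [/\ path e u p, last u p = v & size p = dist e u v].
Proof.
case: (within_path (dist_within u v)) => p [H1 H2 H3].
exists p; split => //; apply/eqP; rewrite eqn_leq H3 /=.
by rewrite -H2 dist_le.
Qed.

Lemma dist0 u : dist e u u = 0.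
Proof. by apply/eqP; rewrite -leqn0; apply: (@dist_min 0) => /=. Qed.

Lemma dist0E u v : (dist e u v == 0) = (u == v).
Proof.
apply/idP/eqP => [/eqP H | ->]; last by rewrite dist0.
by have := dist_within u v; rewrite H /= => /eqP.
Qed.

Lemma dist_adj x y z : e x y -> dist e x z <= (dist e y z).+1.
Proof.
move=> Hxy; case: (dist_path y z) => p [H1 H2 H3].
have := @dist_le (y :: p) x; rewrite /= Hxy H1 H2 H3; exact.
Qed.

Lemma dist_parent x z : x != z -> exists2 y, e x y & (dist e y z).+1 = dist e x z.
Proof.
move=> Hxz; case: (dist_path x z) => [[|y p] [H1 H2 H3]].
  by move: H2 Hxz => /= ->; rewrite eqxx.
move: H1 => /= /andP [Hxy H1]; exists y => //.
apply/eqP; rewrite eqn_leq dist_adj // andbT -H3 /= ltnS -H2 /=.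
exact: dist_le.
Qed.

Lemma dist_size u v : dist e u v <= #|T|.
Proof.
by rewrite /dist; have := find_size (fun n => within e n u v) (iota 0 #|T|); rewrite size_iota.
Qed.

End Dist.
Section Tree.
Variables (T : finType) (e : rel T).
Hypothesis Ht : is_tree e.

Let Hsym : symmetric e. Proof. by case: Ht => [[]]. Qed.
Let Hirr : irreflexive e. Proof. by case: Ht => [[]]. Qed.
Let Hc : forall u v, connect e u v. Proof. by case: Ht => _ []. Qed.
Let Hacyc c : uniq c -> 2 < size c -> cycle e c -> False.
Proof. by case: Ht => _ [_ H] Hu Hs Hcy; move: (H c Hu Hs); rewrite Hcy. Qed.

Lemma ball_path z m a b : dist e a z <= m -> dist e b z <= m ->
  exists q, [/\ path e a q, last a q = b, uniq (a :: q) &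
                forall w, w \in q -> dist e w z <= m].
Proof.
pose e' := [rel x y | e x y && (dist e x z <= m) && (dist e y z <= m)].
have Hs' : symmetric e'.
  by move=> x y /=; rewrite Hsym -!andbA [(dist e x z <= m) && _]andbC.
have Hb : forall k a, dist e a z <= k -> dist e a z <= m -> connect e' a z.
  elim=> [|k IH] a0.
    by rewrite leqn0 (dist0E Hc); move=> /eqP -> _; apply: connect0.
  move=> Hk Hm; case: (eqVneq a0 z) => [->|Hne]; first exact: connect0.
  case: (dist_parent (Hc) Hne) => y Hy Hd.
  apply: connect_trans (IH y _ _).
  - by apply: connect1; rewrite /= Hy Hm /=; apply: leq_trans Hm; rewrite -Hd.
  - by rewrite -ltnS Hd.
  - by apply: leq_trans Hm; rewrite -Hd.
move=> Ha Hbm.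
have : connect e' a b.
  apply: connect_trans (Hb _ _ (leqnn _) Ha) _.
  by rewrite (sym_connect_sym Hs'); apply: (Hb _ _ (leqnn _) Hbm).
case/connectP=> p Hp ->.
case/shortenP: Hp => p' Hp' Hu _.
exists p'; split => //.
- by apply: sub_path Hp' => x y /= /andP [/andP []].
- elim: p' a Hp' {Hu Ha} => // y q IH a0 /= /andP [/andP [/andP [_ _] Hy] Hq] w.
  by rewrite in_cons => /orP [/eqP -> // | ]; apply: IH Hq w.
Qed.

Lemma parent_uniq x z y1 y2 : e x y1 -> e x y2 ->
  (dist e y1 z).+1 = dist e x z -> (dist e y2 z).+1 = dist e x z -> y1 = y2.
Proof.
move=> H1 H2 D1 D2; apply/eqP/negP => /negP Hne.
have Hm2 : dist e y2 z <= dist e y1 z by rewrite -ltnS D2 D1.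
case: (ball_path (leqnn _) Hm2) => q [Hq Hl Hu Hin].
apply: (@Hacyc (x :: y1 :: q)).
- rewrite cons_uniq Hu andbT in_cons negb_or; apply/andP; split.
    by apply/negP => /eqP E; move: D1; rewrite -E => /eqP; rewrite eqn_leq ltnn.
  by apply/negP => /Hin; rewrite -D1 ltnn.
- by case: q Hl {Hq Hu Hin} => [/= E|]; [rewrite E eqxx in Hne | ].
- by rewrite /= rcons_path H1 Hq Hl Hsym H2.
Qed.

Lemma adj_neq x y z : e x y -> dist e x z != dist e y z.
Proof.
move=> Hxy; apply/negP => /eqP E.
case: (eqVneq x z) => [Exz | Hxz].
  move: E; rewrite Exz dist0 => /esym /eqP; rewrite (dist0E Hc) => /eqP Eyz.
  by move: Hxy; rewrite Exz Eyz Hirr.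
have Hyz : y != z by apply/negP => /eqP Eyz; move: E; rewrite Eyz dist0 => /eqP; rewrite (dist0E Hc) (negbTE Hxz).
case: (dist_parent Hc Hxz) => px Hpx Dx.
case: (dist_parent Hc Hyz) => py Hpy Dy.
have Hm2 : dist e py z <= dist e px z by rewrite -ltnS Dy Dx E.
case: (ball_path (leqnn _) Hm2) => q [Hq Hl Hu Hin].
have Nx : forall w, w \in px :: q -> w != x.
  move=> w; rewrite in_cons => /orP [/eqP -> | /Hin Hw].
    by apply/negP => /eqP E'; move: Dx; rewrite E' => /eqP; rewrite eqn_leq ltnn.
  by apply/negP => /eqP E'; move: Hw; rewrite E' -Dx ltnn.
have Ny : forall w, w \in px :: q -> w != y.
  move=> w; rewrite in_cons => /orP [/eqP -> | /Hin Hw].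
    by apply/negP => /eqP E'; move: Dx; rewrite E' -E => /eqP; rewrite eqn_leq ltnn.
  by apply/negP => /eqP E'; move: Hw; rewrite E' -E -Dx ltnn.
apply: (@Hacyc (y :: x :: px :: q)) => //.
- rewrite cons_uniq [uniq (x :: _)]cons_uniq Hu andbT; apply/andP; split.
    rewrite in_cons negb_or eq_sym; apply/andP; split.
      by apply/negP => /eqP E'; move: Hxy; rewrite E' Hirr.
    by apply/negP => /Ny; rewrite eqxx.
  by apply/negP => /Nx; rewrite eqxx.
- by rewrite /= rcons_path Hsym Hxy Hpx Hq Hl Hsym Hpy.
Qed.

Lemma adj_dist x y z : e x y ->
  dist e y z = (dist e x z).+1 \/ dist e x z = (dist e y z).+1.
Proof.
move=> Hxy; have H1 := dist_adj Hc z Hxy.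
have H2 := dist_adj Hc z (etrans (Hsym y x) Hxy).
have H3 := adj_neq z Hxy.
case: (ltngtP (dist e x z) (dist e y z)) => [Hl|Hl|E]; last by rewrite E eqxx in H3.
  by left; apply/eqP; rewrite eqn_leq H2 Hl.
by right; apply/eqP; rewrite eqn_leq H1 Hl.
Qed.

End Tree.
Section Deg.
Variables (T : finType) (e : rel T).

Lemma nb_in s x p : uniq s -> (forall y, y \in s -> e x y) -> size s = deg e x ->
  e x p -> p \in s.
Proof.
move=> Hu Hs Hsz Hp; case Hn: (p \in s) => //.
have : #|p :: s| <= deg e x.
  apply: subset_leq_card; apply/subsetP => y.
  by rewrite in_cons inE => /orP [/eqP -> | /Hs].
have Hu' : uniq (p :: s) by rewrite /= Hn Hu.
by rewrite (card_uniqP Hu') /= Hsz ltnn.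
Qed.

Lemma nb_ex s x : uniq s -> size s < deg e x -> exists2 p, e x p & p \notin s.
Proof.
move=> Hu Hsz.
have : ~~ ([set w | e x w] \subset s).
  apply/negP => /subset_leq_card Hle.
  by have := leq_trans Hle (card_size s); rewrite leqNgt Hsz.
case/subsetPn => p; rewrite inE => Hp Hn; by exists p.
Qed.

Lemma deg_pos x y : e x y -> (0 < deg e x)%N.
Proof. by move=> H; apply/card_gt0P; exists y; rewrite inE. Qed.

End Deg.

Section Ident.
Variables (R : realFieldType) (T : finType) (e : rel T).
Hypothesis Ht : is_tree e.
Hypothesis Hsc : subcubic e.
Local Open Scope ring_scope.

Let Hsym : symmetric e. Proof. by case: Ht => [[]]. Qed.
Let Hc : forall u v, connect e u v. Proof. by case: Ht => _ []. Qed.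

Definition g (z x : T) : R := (2^-1) ^+ dist e x z.

Lemma wtE u v : wt R e u v = 2 * g v u.
Proof. by rewrite /wt Hc. Qed.

Lemma par_sum z x (c : R) :
  \sum_(v | e x v && ((dist e v z).+1 == dist e x z)) c = (x != z)%:R * c.
Proof.
case: (eqVneq x z) => [->|Hxz].
  by rewrite big_pred0 ?mul0r // => v; rewrite dist0 andbF.
case: (dist_parent Hc Hxz) => p Hp Dp.
rewrite (big_pred1 p) ?mul1r // => v /=.
apply/andP/eqP => [[H1 /eqP H2]|->]; last by rewrite Hp Dp.
exact: (parent_uniq Ht H1 Hp H2 Dp).
Qed.

Lemma g_succ z u v : dist e v z = (dist e u z).+1 -> g z u = 2 * g z v.
Proof.
move=> H; rewrite /g H exprS mulrA divff ?mul1r //.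
by rewrite pnatr_eq0.
Qed.

Lemma sum_deg z : \sum_u g z u * (deg e u)%:R = 3 * (\sum_u g z u - 1).
Proof.
have E1 : forall u, g z u * (deg e u)%:R =
    \sum_(v | e u v && ((dist e v z).+1 == dist e u z)) g z u +
    \sum_(v | e u v && ~~ ((dist e v z).+1 == dist e u z)) 2 * g z v.
  move=> u; rewrite mulr_natr /deg -sumr_const (bigID (fun v => (dist e v z).+1 == dist e u z)) /=.
  congr (_ + _).
    by apply: eq_bigl => v; rewrite inE.
  rewrite [LHS](eq_bigl (fun v => e u v && ~~ ((dist e v z).+1 == dist e u z))); last first.
    by move=> v; rewrite inE.
  apply: eq_bigr => v /andP [Huv Hn]; apply: g_succ.
  by case: (adj_dist Ht z Huv) => // H; rewrite H eqxx in Hn.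
rewrite (eq_bigr _ (fun u _ => E1 u)) big_split /=.
rewrite [X in _ + X](exchange_big_dep predT) //=.
under [X in X + _ = _]eq_bigr do rewrite par_sum.
under [X in _ + X = _]eq_bigr => v _.
  rewrite (eq_bigl (fun u => e v u && ((dist e u z).+1 == dist e v z))).
    by rewrite par_sum; over.
  move=> u /=; apply/andP/andP => [[Hvu Hn]|[Hvu /eqP Hn]].
    split; first by rewrite Hsym.
    by case: (adj_dist Ht z (etrans (Hsym _ _) Hvu)) => H; [rewrite H eqxx in Hn|rewrite H].
  split; first by rewrite Hsym.
  by rewrite -Hn; apply/eqP; lia.
rewrite [X in _ + X = _](_ : _ = 2 * \sum_v (v != z)%:R * g z v); last first.
  by rewrite mulr_sumr; apply: eq_bigr => v _ /=; rewrite mulrCA.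
have H3 : \sum_u g z u = 1 + \sum_v (v != z)%:R * g z v.
  rewrite (bigD1 z) //= [X in _ = _ + X](bigD1 z) //= eqxx mul0r add0r /g dist0 expr0.
  by congr (_ + _); apply: eq_bigr => u Hu; rewrite Hu mul1r.
rewrite H3; ring.
Qed.

Lemma key_id z :
  \sum_u wt R e u z * ((3 - deg e u)%:R / 6) = 1.
Proof.
have E : forall u, wt R e u z * ((3 - deg e u)%:R / 6) =
   3^-1 * (3 * g z u - g z u * (deg e u)%:R).
  move=> u; rewrite wtE natrB ?Hsc //.
  by field.
rewrite (eq_bigr _ (fun u _ => E u)) -mulr_sumr sumrB -mulr_sumr sum_deg.
by field.
Qed.
End Ident.
Section Main.
Variables (R : realFieldType) (T : finType) (e : rel T) (D : {set T}).
Hypothesis Ht : is_tree e.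
Hypothesis Hsc : subcubic e.
Hypothesis Hmin : min_porous_exp_dom R e D.
Hypothesis Hopt : is_frac_opt R e (#|D|%:R).
Hypothesis HD : (1 < #|D|)%N.
Local Open Scope ring_scope.

Let Hsym : symmetric e. Proof. by case: Ht => [[]]. Qed.
Let Hirr : irreflexive e. Proof. by case: Ht => [[]]. Qed.
Let Hc : forall u v, connect e u v. Proof. by case: Ht => _ []. Qed.
Let Hpor : forall u, 1 <= wstar R e D u. Proof. by case: Hmin. Qed.

Lemma part_i u : (deg e u < 3)%N -> wstar R e D u = 1.
Proof.
move=> Hu.
pose y := fun u => ((3 - deg e u)%:R / 6 : R).
have Hy0 : forall u, 0 <= y u by move=> v; rewrite /y divr_ge0 ?ler0n.
have Hfeas : frac_feasible e y.
  by split => // v; rewrite (@key_id R T e Ht Hsc).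
have H1 := Hopt.2 y Hfeas.
have H2 : #|D|%:R = \sum_v y v * wstar R e D v.
  rewrite -sumr_const.
  rewrite (eq_bigr (fun z => \sum_v wt R e v z * y v)); last first.
    by move=> z _; rewrite (@key_id R T e Ht Hsc).
  rewrite exchange_big /=; apply: eq_bigr => v _.
  by rewrite /wstar mulr_sumr; apply: eq_bigr => z _; rewrite mulrC.
have H3 : \sum_v y v * (wstar R e D v - 1) = 0.
  apply/le_anti/andP; split.
    rewrite (eq_bigr (fun v => y v * wstar R e D v - y v)); last first.
      by move=> v _; rewrite mulrBr mulr1.
    by rewrite sumrB -H2 subr_le0.
  by apply: sumr_ge0 => v _; rewrite mulr_ge0 // subr_ge0.
have Hnn : forall v, true -> 0 <= y v * (wstar R e D v - 1).
  by move=> v _; rewrite mulr_ge0 // subr_ge0.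
have /eqP := psumr_eq0P Hnn H3 (i:=u) isT.
rewrite mulf_eq0 => /orP [|/eqP/subr0_eq //].
rewrite /y mulf_eq0 invr_eq0 !pnatr_eq0 orbF subn_eq0 leqNgt.
by rewrite Hu.
Qed.

Lemma g_ge0 z x : 0 <= g R e z x.
Proof. by rewrite /g exprn_ge0 // invr_ge0 ler0n. Qed.

Lemma g_gt0 z x : 0 < g R e z x.
Proof. by rewrite /g exprn_gt0 // invr_gt0 ltr0n. Qed.

Lemma g0 z : g R e z z = 1.
Proof. by rewrite /g dist0 expr0. Qed.

Lemma g_S z u v : dist e v z = (dist e u z).+1 -> g R e z u = 2 * g R e z v.
Proof. exact: g_succ. Qed.

Lemma wstarE u : wstar R e D u = \sum_(z in D) 2 * g R e z u.
Proof. by apply: eq_bigr => z _; rewrite (wtE R Ht). Qed.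

Lemma lin3 (a b c : R) x y t :
  \sum_(z in D) (a * (2 * g R e z x) + b * (2 * g R e z y) + c * (2 * g R e z t)) =
  a * wstar R e D x + b * wstar R e D y + c * wstar R e D t.
Proof. by rewrite !wstarE !big_split /= -!mulr_sumr. Qed.

Lemma other_in_D v : exists2 z, z \in D & z != v.
Proof.
have H : (1 < #|D|)%N := HD; rewrite (cardsD1 v) in H.
have : (0 < #|D :\ v|)%N by move: H; case: (v \in D) => /=; lia.
by case/card_gt0P => z; rewrite !inE => /andP [H1 H2]; exists z.
Qed.

Lemma D_deg3 v : v \in D -> deg e v = 3%N.
Proof.
move=> Hv; apply/eqP; rewrite eqn_leq Hsc /= leqNgt; apply/negP => /part_i H.
have : wt R e v v <= wstar R e D v.
  rewrite /wstar (bigD1 v) //= lerDl; apply: sumr_ge0 => z _.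
  by rewrite (wtE R Ht) mulr_ge0 ?g_ge0.
by rewrite H (wtE R Ht) g0 mulr1; lra.
Qed.

Lemma D_neq v : v \in D -> (deg e v < 3)%N -> False.
Proof. by move/D_deg3 => ->. Qed.

Lemma nb_notD u v : (deg e u < 3)%N -> e u v -> v \notin D.
Proof.
move=> Hu Huv; apply/negP => Hv.
case: (other_in_D v) => z Hz Hzv.
have Hd : dist e u v = 1%N.
  apply/eqP; rewrite eqn_leq; have := dist_adj Hc v Huv; rewrite dist0 => -> /=.
  by rewrite lt0n (dist0E Hc); apply/negP => /eqP E; move: Huv; rewrite E Hirr.
have : wt R e u v + wt R e u z <= wstar R e D u.
  rewrite /wstar (bigD1 v) //= lerD2l (bigD1 z) /= ?Hz ?Hzv //= lerDl.
  by apply: sumr_ge0 => w _; rewrite (wtE R Ht) mulr_ge0 ?g_ge0.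
rewrite part_i // !(wtE R Ht) /g Hd expr1.
have := g_gt0 z u; rewrite /g; lra.
Qed.

Lemma adj_both u v : e u v -> wstar R e D u = 1 -> wstar R e D v = 1 -> False.
Proof.
move=> Huv Hu Hv.
pose P z := (dist e u z).+1 == dist e v z.
pose a := \sum_(z in D | P z) 2 * g R e z u.
pose b := \sum_(z in D | ~~ P z) 2 * g R e z v.
have E1 : wstar R e D u = a + 2^-1 * b.
  rewrite wstarE (bigID P) /=; congr (_ + _).
  rewrite mulr_sumr; apply: eq_bigr => z /andP [_ Hz].
  case: (adj_dist Ht z Huv) => H; first by rewrite /P H eqxx in Hz.
  by rewrite (g_S H); field.
have E2 : wstar R e D v = 2^-1 * a + b.
  rewrite wstarE (bigID P) /=; congr (_ + _).
  rewrite /a mulr_sumr; apply: eq_bigr => w /andP [_ /eqP Hw].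
  by rewrite (g_S (esym Hw)); field.
have Ha : 3 * a = 2 by lra.
pose N := #|T|.
pose m := (\sum_(z in D | P z) 2 ^ (N.+1 - dist e u z))%N.
have Hm : a * 2 ^+ N = m%:R.
  rewrite /a mulr_suml natr_sum; apply: eq_bigr => z _.
  have Hd : (dist e u z <= N)%N := dist_size e u z.
  rewrite natrX subSn // exprS -{1}(subnK Hd) exprD /g exprVn.
  field; by rewrite expf_neq0 // pnatr_eq0.
have : ((3 * m)%N%:R : R) = (2 ^ N.+1)%N%:R.
  by rewrite natrM -Hm natrX exprS mulrA Ha.
move/eqP; rewrite eqr_nat => /eqP H3.
have : (3 %| 2 ^ N.+1)%N by rewrite -H3 dvdn_mulr.
by rewrite Euclid_dvdX.
Qed.

Lemma leaf_par x y z : deg e x = 1%N -> e x y -> x != z -> dist e x z = (dist e y z).+1.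
Proof.
move=> Hd Hxy Hxz; case: (dist_parent Hc Hxz) => p Hp Dp.
have : p \in [:: y].
  by apply: (nb_in (e:=e) (x:=x)) => // w; rewrite inE => /eqP ->.
by rewrite inE => /eqP E; rewrite -Dp E.
Qed.

Lemma nonpar x p q z : e x p -> (dist e p z).+1 = dist e x z -> e x q -> q != p ->
  dist e q z = (dist e x z).+1.
Proof.
move=> Hp Dp Hq Hqp; case: (adj_dist Ht z Hq) => // H.
by move: Hqp; rewrite (parent_uniq Ht Hq Hp (esym H) Dp) eqxx.
Qed.

Lemma nb2 w a b p : deg e w = 2%N -> e w a -> e w b -> a != b -> e w p -> p = a \/ p = b.
Proof.
move=> Hd Ha Hb Hab Hp.
have : p \in [:: a; b].
  apply: (nb_in (e:=e) (x:=w)) => //; first by rewrite /= inE Hab.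
  by move=> y; rewrite !inE => /orP [] /eqP ->.
by rewrite !inE => /orP [] /eqP ->; [left|right].
Qed.

Lemma nb3 w a b c p : deg e w = 3%N -> e w a -> e w b -> e w c ->
  a != b -> a != c -> b != c -> e w p -> [\/ p = a, p = b | p = c].
Proof.
move=> Hd Ha Hb Hc' Hab Hac Hbc Hp.
have : p \in [:: a; b; c].
  apply: (nb_in (e:=e) (x:=w)) => //; first by rewrite /= !inE negb_or Hab Hac Hbc.
  by move=> y; rewrite !inE => /orP [/eqP -> | /orP [] /eqP ->].
by rewrite !inE => /orP [/eqP -> | /orP [] /eqP ->]; [apply: Or31|apply: Or32|apply: Or33].
Qed.

Lemma other_nb w a n : deg e w = n.+2 -> e w a -> exists2 b, e w b & b != a.
Proof.
move=> Hd Ha; have := @nb_ex T e [:: a] w isT; rewrite Hd => /(_ isT) [b Hb].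
by rewrite inE => Hn; exists b.
Qed.

Lemma neq_dist a b z : dist e a z != dist e b z -> a != b.
Proof. by apply: contra => /eqP ->. Qed.

Lemma part_iii u w : deg e u = 1%N -> deg e w = 2%N -> dist e u w = 2%N -> False.
Proof.
move=> Hdu Hdw Huw2.
have Huw : u != w by rewrite -(dist0E Hc) Huw2.
case: (dist_parent Hc Huw) => v Huv Dv; rewrite Huw2 in Dv; case: Dv => Dv.
have Hvw : v != w by rewrite -(dist0E Hc) Dv.
case: (dist_parent Hc Hvw) => w' Hvw' Dw'; rewrite Dv in Dw'; case: Dw' => /eqP.
rewrite (dist0E Hc) => /eqP Ew'; subst w'.
have Hwv : e w v by rewrite Hsym.
case: (other_nb Hdw Hwv) => w2 Hww2 Hw2v.
have Hvw2 : v != w2 by rewrite eq_sym.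
have Hu1 : wstar R e D u = 1 by apply: part_i; rewrite Hdu.
have Hw1 : wstar R e D w = 1 by apply: part_i; rewrite Hdw.
have key : forall z, z \in D ->
    4 * (2 * g R e z u) + (-5) * (2 * g R e z w) + 2 * (2 * g R e z w2) = 0.
  move=> z Hz.
  have Hzu : u != z by apply/negP => /eqP E; move: Hdu; rewrite E D_deg3.
  have Hzw : w != z by apply/negP => /eqP E; move: Hdw; rewrite E D_deg3.
  have Du := leaf_par Hdu Huv Hzu.
  case: (dist_parent Hc Hzw) => p Hp Dp.
  case: (nb2 Hdw Hwv Hww2 Hvw2 Hp) => Ep; subst p.
  - have E1 : g R e z u = g R e z w by rewrite /g Du Dp.
    have E2 := g_S (nonpar Hwv Dp Hww2 Hw2v).
    lra.
  - have E1 := g_S (nonpar Hww2 Dp Hwv Hvw2).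
    have E2 := g_S Du.
    have E3 := g_S (esym Dp).
    lra.
have := lin3 4 (-5) 2 u w w2.
rewrite (eq_bigr (fun=> 0)); last exact: key.
rewrite big1_eq Hu1 Hw1 => H.
have := Hpor w2; lra.
Qed.

End Main.
Section Main2.
Variables (R : realFieldType) (T : finType) (e : rel T) (D : {set T}).
Hypothesis Ht : is_tree e.
Hypothesis Hsc : subcubic e.
Hypothesis Hmin : min_porous_exp_dom R e D.
Hypothesis Hopt : is_frac_opt R e (#|D|%:R).
Hypothesis HD : (1 < #|D|)%N.
Local Open Scope ring_scope.

Let Hsym : symmetric e. Proof. by case: Ht => [[]]. Qed.
Let Hirr : irreflexive e. Proof. by case: Ht => [[]]. Qed.
Let Hc : forall u v, connect e u v. Proof. by case: Ht => _ []. Qed.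
Let Hpor : forall u, 1 <= wstar R e D u. Proof. by case: Hmin. Qed.
Local Notation part_i := (@part_i R T e D Ht Hsc Hmin Hopt _).
Local Notation D_deg3 := (@D_deg3 R T e D Ht Hsc Hmin Hopt _).
Local Notation nb_notD := (@nb_notD R T e D Ht Hsc Hmin Hopt HD _ _).
Local Notation adj_both := (@adj_both R T e D Ht _ _).
Local Notation leaf_par := (@leaf_par T e Ht _ _ _).
Local Notation nonpar := (@nonpar T e Ht _ _ _ _).
Local Notation g_S := (@g_S R T e _ _ _).
Local Notation lin3 := (@lin3 R T e D Ht).

Lemma nS2 n : (n.+2 != n)%N.
Proof. by elim: n. Qed.

Lemma nb_deg3 u v : (deg e u < 3)%N -> e u v -> deg e v = 3%N.
Proof.
move=> Hu Huv; apply/eqP; rewrite eqn_leq Hsc /= leqNgt; apply/negP => Hv.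
exact: (adj_both Huv (part_i Hu) (part_i Hv)).
Qed.

Lemma part_iv u1 u2 v2 : deg e u1 = 1%N -> deg e u2 = 1%N -> deg e v2 = 2%N ->
  dist e u1 u2 = 2%N -> dist e u1 v2 \in [:: 3%N; 4%N] -> False.
Proof.
move=> Hdu1 Hdu2 Hdv2 D12 D1v2.
have Hu12 : u1 != u2 by rewrite -(dist0E Hc) D12.
case: (dist_parent Hc Hu12) => v Hu1v Dv; rewrite D12 in Dv; case: Dv => Dv.
have Hvu2' : v != u2 by rewrite -(dist0E Hc) Dv.
case: (dist_parent Hc Hvu2') => w' Hvw' Dw'; rewrite Dv in Dw'; case: Dw' => /eqP.
rewrite (dist0E Hc) => /eqP Ew'; subst w'.
have Hvu1 : e v u1 by rewrite Hsym.
have Hu2v : e u2 v by rewrite Hsym.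
have Hdv : deg e v = 3%N by apply: nb_deg3 Hu1v; rewrite Hdu1.
have HvD : v \notin D by apply: nb_notD Hu1v; rewrite Hdu1.
have Hu1v2 : u1 != v2 by rewrite -(dist0E Hc); move: D1v2; rewrite !inE => /orP [] /eqP ->.
have Dl := leaf_par Hdu1 Hu1v Hu1v2.
have Hvv2 : v != v2.
  by rewrite -(dist0E Hc); move: D1v2; rewrite Dl !inE => /orP [] /eqP [] ->.
case: (dist_parent Hc Hvv2) => t Hvt Dt.
have Htu1 : t != u1 by apply: (neq_dist (e:=e) (z:=v2)); rewrite Dl -Dt eq_sym; exact: nS2.
have Hu2v2 : u2 != v2 by apply/negP => /eqP E; move: Hdu2; rewrite E Hdv2.
have Dl2 := leaf_par Hdu2 Hu2v Hu2v2.
have Htu2 : t != u2 by apply: (neq_dist (e:=e) (z:=v2)); rewrite Dl2 -Dt eq_sym; exact: nS2.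
have C1 : forall z, z \in D -> dist e v z = (dist e t z).+1.
  move=> z Hz.
  have Hvz : v != z by apply/negP => /eqP E; move: HvD; rewrite E Hz.
  case: (dist_parent Hc Hvz) => p Hp Dp.
  have Hu1t : u1 != t by rewrite eq_sym.
  have Hu2t : u2 != t by rewrite eq_sym.
  have Hzu1 : u1 != z by apply/negP => /eqP E; move: Hdu1; rewrite E D_deg3.
  have Hzu2 : u2 != z by apply/negP => /eqP E; move: Hdu2; rewrite E D_deg3.
  case: (nb3 Hdv Hvu1 Hvw' Hvt Hu12 Hu1t Hu2t Hp) => Ep; subst p.
  - by move: Dp; rewrite (leaf_par Hdu1 Hu1v Hzu1) => /eqP; rewrite (negbTE (nS2 _)).
  - by move: Dp; rewrite (leaf_par Hdu2 Hu2v Hzu2) => /eqP; rewrite (negbTE (nS2 _)).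
  - by rewrite Dp.
have Hu1W : wstar R e D u1 = 1 by apply: part_i; rewrite Hdu1.
have Hv2W : wstar R e D v2 = 1 by apply: part_i; rewrite Hdv2.
have Gv : forall z, z \in D -> g R e z v = 2 * g R e z u1.
  move=> z Hz; have Hzu1 : u1 != z.
    by apply/negP => /eqP E; move: Hdu1; rewrite E D_deg3.
  exact: (g_S (leaf_par Hdu1 Hu1v Hzu1)).
have Hzv2 : forall z, z \in D -> v2 != z.
  by move=> z Hz; apply/negP => /eqP E; move: Hdv2; rewrite E D_deg3.
move: D1v2; rewrite Dl !inE => /orP [] /eqP [] D3.
-
  move: Dt; rewrite D3 => -[] Dt.
  have Htv2 : t != v2 by rewrite -(dist0E Hc) Dt.
  case: (dist_parent Hc Htv2) => x Htx Dx; rewrite Dt in Dx; case: Dx => /eqP.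
  rewrite (dist0E Hc) => /eqP Ex; subst x.
  have Hv2t : e v2 t by rewrite Hsym.
  case: (other_nb Hdv2 Hv2t) => s Hv2s Hst.
  have Hts : t != s by rewrite eq_sym.
  have key : forall z, z \in D ->
      0 <= (-2) * (2 * g R e z u1) + 1 * (2 * g R e z v2) + 0 * (2 * g R e z s).
    move=> z Hz; have := Gv z Hz; have := C1 z Hz => C1z Gvz.
    case: (dist_parent Hc (Hzv2 z Hz)) => p Hp Dp.
    case: (nb2 Hdv2 Hv2t Hv2s Hts Hp) => Ep; subst p.
    + have E1 : g R e z v = g R e z v2 by rewrite /g C1z Dp.
      lra.
    + have E1 := g_S (nonpar Hv2s Dp Hv2t Hts).
      have E2 := g_S C1z.
      have := g_ge0 R e z u1; lra.
  have := sumr_ge0 (index_enum T) key.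
  by rewrite lin3 Hu1W Hv2W; lra.
-
  move: Dt; rewrite D3 => -[] Dt.
  have Htv2 : t != v2 by rewrite -(dist0E Hc) Dt.
  case: (dist_parent Hc Htv2) => x Htx Dx; rewrite Dt in Dx; case: Dx => Dx.
  have Hxv2' : x != v2 by rewrite -(dist0E Hc) Dx.
  case: (dist_parent Hc Hxv2') => w' Hxw' Dw'; rewrite Dx in Dw'; case: Dw' => /eqP.
  rewrite (dist0E Hc) => /eqP Ew'; subst w'.
  have Hv2x : e v2 x by rewrite Hsym.
  have Hxt : e x t by rewrite Hsym.
  have Hdx : deg e x = 3%N by apply: nb_deg3 Hv2x; rewrite Hdv2.
  have HxD : x \notin D by apply: nb_notD Hv2x; rewrite Hdv2.
  have Hv2t : v2 != t by rewrite eq_sym.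
  have [y Hxy Hyn] : exists2 y, e x y & y \notin [:: v2; t].
    by apply: nb_ex; rewrite /= ?Hdx // inE Hv2t.
  move: Hyn; rewrite !inE negb_or => /andP [Hyv2 Hyt].
  have Hv2y : v2 != y by rewrite eq_sym.
  have Hty : t != y by rewrite eq_sym.
  case: (other_nb Hdv2 Hv2x) => s Hv2s Hsx.
  have Hxs : x != s by rewrite eq_sym.
  have key : forall z, z \in D ->
      32 * (2 * g R e z u1) + (-42) * (2 * g R e z v2) + 20 * (2 * g R e z s) <= 0.
    move=> z Hz; have := Gv z Hz; have := C1 z Hz => C1z Gvz.
    have Hxz : x != z by apply/negP => /eqP E; move: HxD; rewrite E Hz.
    have Gx := g_ge0 R e z x.
    case: (dist_parent Hc Hxz) => p Hp Dp.
    have Htv2' : t != v2 := Htv2.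
    case: (nb3 Hdx Hxw' Hxt Hxy Hv2t Hv2y Hty Hp) => Ep; subst p.
    + have Dt' := nonpar Hxw' Dp Hxt Htv2.
      case: (dist_parent Hc (Hzv2 z Hz)) => p2 Hp2 Dp2.
      case: (nb2 Hdv2 Hv2x Hv2s Hxs Hp2) => Ep2; subst p2.
      * by move: Dp2; rewrite -Dp => /eqP; rewrite (negbTE (nS2 _)).
      have E1 := g_S (esym Dp2).
      have E2 := g_S C1z.
      have E3 := g_S Dt'.
      have E4 := g_S (esym Dp).
      lra.
    + have E1 : g R e z v = g R e z x by rewrite /g C1z Dp.
      have D2 := nonpar Hxt Dp Hxw' Hv2t.
      have E2 := g_S D2.
      have E3 := g_S (nonpar Hv2x (esym D2) Hv2s Hsx).
      lra.
    + have Dt' := nonpar Hxy Dp Hxt Hty.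
      have D2 := nonpar Hxy Dp Hxw' Hv2y.
      have E1 := g_S Dt'.
      have E2 := g_S C1z.
      have E3 := g_S D2.
      have E4 := g_S (nonpar Hv2x (esym D2) Hv2s Hsx).
      lra.
  have := sumr_le0 (index_enum T) key.
  have := Hpor s.
  by rewrite lin3 Hu1W Hv2W; lra.
Qed.
End Main2.

Local Open Scope ring_scope.

Theorem theorem3 (R : realFieldType) (T : finType) (e : rel T) (D : {set T}) :
  is_tree e -> subcubic e ->
  min_porous_exp_dom R e D ->
  is_frac_opt R e (#|D|%:R) ->
  (1 < #|D|)%N ->
  (* (i) *)
  (forall u : T, deg e u \in [:: 1%N; 2%N] -> wstar R e D u = 1) /\
  (* (ii) *)
  ((forall v : T, v \in D -> deg e v = 3%N) /\
   (forall u v : T, deg e u \in [:: 1%N; 2%N] -> e u v -> deg e v = 3%N /\ v \notin D)) /\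
  (* (iii) *)
  ~ (exists u w : T, [/\ deg e u = 1%N, deg e w = 2%N & dist e u w = 2%N]) /\
  (* (iv) *)
  ~ (exists u1 u2 v : T,
       [/\ deg e u1 = 1%N, deg e u2 = 1%N, deg e v = 2%N, dist e u1 u2 = 2%N
         & dist e u1 v \in [:: 3%N; 4%N]]).
Proof.
move=> Ht Hsc Hmin Hopt HD.
have Hlt : forall u, deg e u \in [:: 1%N; 2%N] -> (deg e u < 3)%N.
  by move=> u; rewrite !inE => /orP [] /eqP ->.
split; first by move=> u /Hlt; exact: (part_i Ht Hsc Hmin Hopt).
split; first split.
- by move=> v Hv; exact: (D_deg3 Ht Hsc Hmin Hopt).
- move=> u v /Hlt Hu Huv; split.
    exact: (nb_deg3 Ht Hsc Hmin Hopt Hu Huv).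
  exact: (nb_notD Ht Hsc Hmin Hopt HD Hu Huv).
split.
- by case=> u [w [H1 H2 H3]]; exact: (part_iii Ht Hsc Hmin Hopt H1 H2 H3).
- by case=> u1 [u2 [v [H1 H2 H3 H4 H5]]]; exact: (part_iv Ht Hsc Hmin Hopt HD H1 H2 H3 H4 H5).
Qed.
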